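(* Let $\mathcal B$ be a BMC with $\mathbf c^*_q<\infty$ for all $q\in\mathcal T$, and consider the Q-learning process with learning rates $\lambda_i\in[0,1]$ satisfying $\sum_{i=0}^\infty\lambda_i=\infty$ and a fixed selection distribution with $p_q\ge p_{\min}>0$ for all $q$. Then for every initial vector $Q_0\ge\mathbf 0$, $\lim_{i\to\infty}\mathbb E Q_i=\mathbf c^*$.
   Context: A branching Markov chain (BMC) is $\mathcal B=(\mathcal T,p,c)$ with $\mathcal T$ a finite set of types, $p(q)$ for each $q\in\mathcal T$ a probability distribution with finite support over finite lists $\mathcal T^*$ of types (the offspring distribution), and $c:\mathcal T\to\mathbb R_{>0}$ a strictly positive cost. For a list $\alpha$, $|\alpha|$ is its length and $\alpha_i$ its $i$-th element. $\mathbf c^*_q\in[0,\infty]$ denotes the expected total cost until extinction starting from the single entity $q$; equivalently $\mathbf c^*$ is the least fixed point in $[0,\infty]^{\mathcal T}$ of $F(\mathbf x)_q=c(q)+\sum_\alpha p(q)(\alpha)\sum_{i=1}^{|\alpha|}\mathbf x_{\alpha_i}$. Q-learning process for a BMC: given deterministic learning rates $\lambda_i\in[0,1]$, a probability distribution $(p_q)_{q\in\mathcal T}$ and an initial vector $Q_0\in\mathbb R_{\ge0}^{\mathcal T}$, at each step $i=0,1,2,\dots$ a type $q_i$ is selected with probability $p_{q_i}$ independently of all previous randomness, then a list $\beta^i$ is drawn from $p(q_i)$ independently, and $Q_{i+1}(q_i)=(1-\lambda_i)Q_i(q_i)+\lambda_i\big(c(q_i)+\sum_{j=1}^{|\beta^i|}Q_i(\beta^i_j)\big)$,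 while $Q_{i+1}(q)=Q_i(q)$ for $q\ne q_i$. $\mathbb E Q_i$ is the componentwise expectation. *)

(* Defs.v *)
From HB Require Import structures.
From mathcomp Require Import all_boot all_order all_algebra.
From mathcomp Require Import all_classical all_reals all_analysis.
Set Implicit Arguments. Unset Strict Implicit. Unset Printing Implicit Defensive.
Import Order.TTheory GRing.Theory Num.Theory.
Local Open Scope ring_scope.

Section BMC.
Variables (R : realType) (T : finType).

(* A BMC (T, p, c): types T (a finType), cost c : T -> R, and for every type q
   an offspring distribution p(q) with finite support [supp q] (a duplicate-free
   list of lists of types), given by the weights [pr q alpha]. *)
Definition is_BMC (c : T -> R) (pr : T -> seq T -> R) (supp : T -> seq (seq T)) :=
  [/\ forall q, 0 < c q,
      forall q a, 0 <= pr q a,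
      forall q a, a \notin supp q -> pr q a = 0,
      forall q, uniq (supp q)
    & forall q, \sum_(a <- supp q) pr q a = 1].

Definition Fop (c : T -> R) (pr : T -> seq T -> R) (supp : T -> seq (seq T))
    (x : T -> \bar R) : T -> \bar R :=
  fun q => ((c q)%:E + \sum_(a <- supp q) ((pr q a)%:E * \sum_(t <- a) x t))%E.

Definition is_least_fixpoint c pr supp (cs : T -> \bar R) :=
  [/\ forall q, (0 <= cs q)%E,
      Fop c pr supp cs = cs
    & forall x : T -> \bar R, (forall q, (0 <= x q)%E) -> Fop c pr supp x = x ->
        forall q, (cs q <= x q)%E].

Definition qupdate (c : T -> R) (Q : T -> R) (l : R) (q : T) (b : seq T) : T -> R :=
  fun r => if r == q then (1 - l) * Q q + l * (c q + \sum_(t <- b) Q t) else Q r.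

(* [EQ c pr supp ps lam n k Q] is the expectation (componentwise) of the vector
   obtained after n further Q-learning steps, the first of which has index k,
   starting from the (deterministic) vector Q: each step independently selects
   q with probability ps q, then draws b with probability pr q b. *)
Fixpoint EQ (c : T -> R) (pr : T -> seq T -> R) (supp : T -> seq (seq T))
    (ps : T -> R) (lam : nat -> R) (n k : nat) (Q : T -> R) : T -> R :=
  match n with
  | 0 => Q
  | n'.+1 => fun r => \sum_(q : T) ps q * \sum_(b <- supp q)
        pr q b * EQ c pr supp ps lam n' k.+1 (qupdate c Q (lam k) q b) r
  end.

Definition EQi c pr supp ps lam (Q0 : T -> R) (i : nat) : T -> R :=
  EQ c pr supp ps lam i 0 Q0.

End BMC.

(* Main.v *)
Require Import Defs.
From HB Require Import structures.
From mathcomp Require Import all_boot all_order all_algebra.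
From mathcomp Require Import all_classical all_reals all_analysis.
From mathcomp Require Import ring lra.
Import Order.TTheory GRing.Theory Num.Theory.
Import numFieldNormedType.Exports.
Local Open Scope classical_set_scope.
Local Open Scope ring_scope.

Section Ana.
Variables (R : realType) (T : finType) (pr : T -> seq T -> R)
  (supp : T -> seq (seq T)).
Definition Bop (Q : T -> R) r := \sum_(b <- supp r) pr r b * \sum_(t <- b) Q t.
Hypothesis pr0 : forall q a, 0 <= pr q a.

Lemma Bop_lin x y r : Bop x r - Bop y r = Bop (fun t => x t - y t) r.
Proof.
rewrite /Bop -sumrB; apply: eq_bigr => b _; by rewrite -mulrBr sumrB.
Qed.

Lemma Bop_norm (e s : T -> R) m r : (forall t, `|e t| <= m * s t) -> `|Bop e r| <= m * Bop s r.
Proof.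
move=> H; rewrite /Bop mulr_sumr; apply: le_trans (ler_norm_sum _ _ _) _.
apply: ler_sum => b _; rewrite normrM ger0_norm // mulrCA; apply: ler_wpM2l => //.
apply: le_trans (ler_norm_sum _ _ _) _; rewrite mulr_sumr; exact: ler_sum.
Qed.

Variables (c : T -> R) (s : T -> R) (gam pmin : R) (lam : nat -> R) (al : nat -> T -> R)
  (x : nat -> T -> R).
Hypothesis spos : forall r, 0 < s r.
Hypothesis sfix : forall r, s r = c r + Bop s r.
Hypothesis gam01 : 0 <= gam < 1.
Hypothesis Bgam : forall r, Bop s r <= gam * s r.
Hypothesis al01 : forall i r, 0 <= al i r <= 1.
Hypothesis alp : forall i r, pmin * lam i <= al i r.
Hypothesis pmin0 : 0 < pmin.
Hypothesis lam0 : forall i, 0 <= lam i.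
Hypothesis xrec : forall i r, x i.+1 r = x i r + al i r * (c r + Bop (x i) r - x i r).

Definition e i r := x i r - s r.
Definition P m i := forall r, `|e i r| <= m * s r.

Lemma erec i r : e i.+1 r = (1 - al i r) * e i r + al i r * Bop (e i) r.
Proof.
rewrite /e xrec -Bop_lin. have -> : c r = s r - Bop s r by rewrite {1}sfix addrK. ring.
Qed.

Lemma stepb m i r : P m i -> `|e i.+1 r| <= (1 - al i r) * `|e i r| + al i r * (gam * m * s r).
Proof.
move=> H; rewrite erec; apply: le_trans (ler_normD _ _) _.
have [a0 a1] := andP (al01 i r).
have a2 : 0 <= 1 - al i r by rewrite subr_ge0.
rewrite !normrM (ger0_norm a0) (ger0_norm a2); apply: lerD => //.
apply: ler_wpM2l => //.
apply: le_trans; first exact: (Bop_norm (e i) s m r H).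
have m0 : 0 <= m by have := le_trans (normr_ge0 _) (H r); rewrite pmulr_lge0.
by rewrite (mulrC gam) -mulrA; apply: ler_wpM2l.
Qed.

Lemma step m i : 0 <= m -> P m i -> P m i.+1.
Proof.
move=> m0 H r; apply: le_trans (stepb m i r H) _.
have [a0 a1] := andP (al01 i r); have [g0 g1] := andP gam01.
have sr := spos r; have Hr := H r.
have h1 : gam * m * s r <= m * s r.
  by rewrite -mulrA ler_piMl ?(mulr_ge0 m0 (ltW sr)) ?(ltW g1).
have h2 : (1 - al i r) * `|e i r| <= (1 - al i r) * (m * s r).
  by apply: ler_wpM2l => //; rewrite subr_ge0.
have h3 : al i r * (gam * m * s r) <= al i r * (m * s r) by apply: ler_wpM2l.
lra.
Qed.

Lemma stepn m K j : 0 <= m -> P m K -> P m (K + j)%N.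
Proof. move=> m0 H; elim: j => [|j IH]; first by rewrite addn0. by rewrite addnS; apply: step. Qed.

Lemma series_mono K j : series lam K <= series lam (K + j)%N.
Proof.
elim: j => [|j IH]; first by rewrite addn0.
by rewrite addnS seriesSr; apply: le_trans IH _; rewrite lerDl.
Qed.

Lemma contr m K j r : 0 <= m -> P m K ->
  (`|e (K+j)%N r| - gam * m * s r) * (1 + pmin * (series lam (K+j)%N - series lam K))
   <= (1-gam) * m * s r.
Proof.
move=> m0 H; have [g0 g1] := andP gam01; have sr := spos r.
elim: j => [|j IH].
  rewrite addn0 subrr mulr0 addr0 mulr1 !mulrBl mul1r lerD2r; exact: H.
rewrite addnS seriesSr.
set u := `|e (K + j)%N r| - gam * m * s r in IH *.
set A := pmin * (series lam (K + j)%N - series lam K) in IH *.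
have A0 : 0 <= A by apply: mulr_ge0; [exact: ltW | rewrite subr_ge0; exact: series_mono].
have b0 : 0 <= pmin * lam (K + j)%N by apply: mulr_ge0; [exact: ltW | exact: lam0].
have ab := alp (K + j)%N r; have [a0 a1] := andP (al01 (K + j)%N r).
have W0 : 0 <= (1 - gam) * m * s r by apply: mulr_ge0; [apply: mulr_ge0 => //; lra | exact: ltW].
have hu : `|e (K + j)%N.+1 r| - gam * m * s r <= (1 - al (K + j)%N r) * u.
  have := stepb m (K + j)%N r (stepn m K j m0 H); rewrite /u; lra.
have -> : 1 + pmin * (series lam (K + j)%N + lam (K + j)%N - series lam K) =
   1 + A + pmin * lam (K + j)%N by rewrite /A; ring.
set u' := `|e (K + j)%N.+1 r| - gam * m * s r in hu *.
set b := pmin * lam (K + j)%N in ab b0 *.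
set a := al (K + j)%N r in hu ab a0 a1 *.
have h1 : u' * (1 + A + b) <= (1 - a) * u * (1 + A + b).
  by apply: ler_wpM2r => //; lra.
have [u0|u0] := leP 0 u.
  have h2 : (1 - a) * u * (1 + A + b) <= (1 - b) * u * (1 + A + b).
    by apply: ler_wpM2r; [lra| apply: ler_wpM2r => //; lra].
  have h3 : (1 - b) * (1 + A + b) <= 1 + A by nra.
  have h4 : (1 - b) * u * (1 + A + b) <= u * (1 + A).
    by nra.
  lra.
have h2 : (1 - a) * u * (1 + A + b) <= 0.
  have h5 : (1 - a) * u <= 0 by nra.
  nra.
lra.
Qed.
Hypothesis Sdiv : series lam @ \oo --> +oo.

Lemma improve m K : 0 <= m -> P m K -> exists K', P ((1 + gam) / 2 * m) K'.
Proof.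
move=> m0 H.
have [N _ HN] := cvgry_ge Sdiv (series lam K + pmin^-1).
have HS := HN (K + N)%N (leq_addl K N).
exists (K + N)%N => r.
have C := contr m K N r m0 H.
have [g0 g1] := andP gam01; have sr := spos r.
set S := series lam (K + N)%N in HS C.
have A1 : 1 <= pmin * (S - series lam K).
  by rewrite -ler_pdivrMl // mulr1 lerBrDl.
set A := pmin * (S - series lam K) in A1 C.
set u := `|e (K + N)%N r| - gam * m * s r in C.
have W0 : 0 <= (1 - gam) * m * s r by apply: mulr_ge0; [apply: mulr_ge0 => //; lra | exact: ltW].
have hu : u <= (1 - gam) * m * s r / 2.
  have [u0|u0] := leP 0 u; last lra.
  nra.
rewrite /u in hu; lra.
Qed.

Lemma iter m : 0 <= m -> P m 0 -> forall n, exists K, P (((1 + gam) / 2) ^+ n * m) K.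
Proof.
move=> m0 H; elim => [|n [K HK]]; first by exists 0%N; rewrite expr0 mul1r.
have [g0 g1] := andP gam01.
have z0 : 0 <= ((1 + gam) / 2) ^+ n * m by apply: mulr_ge0 => //; apply: exprn_ge0; lra.
have [K' HK'] := improve _ K z0 HK; exists K'.
by rewrite exprS -mulrA.
Qed.

Lemma conv m q : 0 <= m -> P m 0 -> (fun i => x i q) @ \oo --> s q.
Proof.
move=> m0 H; apply/cvgrPdist_le => eps eps0.
have [g0 g1] := andP gam01; have sq := spos q.
set z := (1 + gam) / 2.
have z1 : `|z| < 1 by rewrite ger0_norm /z; lra.
have M0 : 0 < m * s q + 1 by apply: ltr_pwDr => //; apply: mulr_ge0 => //; exact: ltW.
have := cvg_expr z1; move/cvgrPdist_le => /(_ (eps / (m * s q + 1))).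
case; first by apply: divr_gt0.
move=> N0 _ HN0.
have HzN := HN0 N0 (leqnn N0); rewrite /= sub0r normrN in HzN.
have [K HK] := iter m m0 H N0.
have zn0 : 0 <= z ^+ N0 by apply: exprn_ge0; rewrite /z; lra.
exists K => // i /= Ki.
have := stepn (z ^+ N0 * m) K (i - K) (mulr_ge0 zn0 m0) HK q.
rewrite subnKC // /e distrC => h; apply: le_trans h _.
rewrite ger0_norm // in HzN.
have : z ^+ N0 * (m * s q + 1) <= eps by rewrite -ler_pdivlMr.
have : 0 <= z ^+ N0 * m * s q by apply: mulr_ge0 => //; [exact: mulr_ge0 | exact: ltW].
nra.
Qed.
End Ana.
Section Alg.
Variables (R : realType) (T : finType) (c : T -> R) (pr : T -> seq T -> R)
  (supp : T -> seq (seq T)) (ps : T -> R) (lam : nat -> R).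

Definition Aff (f : (T -> R) -> T -> R) :=
  forall x y z a r, f (fun t => x t + a * (y t - z t)) r = f x r + a * (f y r - f z r).

Lemma qupdate_aff x y z a l q b :
  qupdate c (fun t => x t + a * (y t - z t)) l q b =
  fun t => qupdate c x l q b t + a * (qupdate c y l q b t - qupdate c z l q b t).
Proof.
apply: funext => t; rewrite /qupdate; case: (t == q) => //.
rewrite big_split /= -mulr_sumr sumrB; ring.
Qed.

Lemma EQ_aff n k : Aff (EQ c pr supp ps lam n k).
Proof.
elim: n k => [|n IH] k x y z a r //=.
set F := fun w q => ps q * \sum_(b <- supp q) pr q b * EQ c pr supp ps lam n k.+1 (qupdate c w (lam k) q b) r.
transitivity (\sum_(q : T) (F x q + a * (F y q - F z q))); last first.
  by rewrite big_split /= -mulr_sumr sumrB.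
apply: eq_bigr => q _; rewrite /F.
transitivity (ps q * \sum_(b <- supp q) (pr q b * EQ c pr supp ps lam n k.+1 (qupdate c x (lam k) q b) r
   + a * (pr q b * EQ c pr supp ps lam n k.+1 (qupdate c y (lam k) q b) r
         - pr q b * EQ c pr supp ps lam n k.+1 (qupdate c z (lam k) q b) r))).
  by congr (_ * _); apply: eq_bigr => b _; rewrite qupdate_aff IH; ring.
rewrite big_split /= -mulr_sumr sumrB; ring.
Qed.

Lemma aff_sum (f : (T -> R) -> T -> R) (I : Type) (s : seq I) (w : I -> R) g r :
  Aff f -> f (fun t => \sum_(i <- s) w i * g i t) r =
    f (fun _ => 0) r + \sum_(i <- s) w i * (f (g i) r - f (fun _ => 0) r).
Proof.
move=> Hf; elim: s => [|i s IH].
  by rewrite big_nil addr0; congr f; apply: funext => t; rewrite big_nil.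
have -> : (fun t => \sum_(j <- i :: s) w j * g j t) =
   (fun t => (fun t => \sum_(j <- s) w j * g j t) t + w i * (g i t - (fun _ => 0) t)).
  by apply: funext => t; rewrite big_cons subr0 addrC.
by rewrite Hf IH big_cons; ring.
Qed.

Definition Mop (l : nat) (Q : T -> R) : T -> R :=
  fun t => \sum_(q : T) ps q * \sum_(b <- supp q) pr q b * qupdate c Q (lam l) q b t.

Hypothesis ps1 : \sum_(q : T) ps q = 1.
Hypothesis pr1 : forall q, \sum_(b <- supp q) pr q b = 1.

Lemma EQ_first n k Q : EQ c pr supp ps lam n.+1 k Q = EQ c pr supp ps lam n k.+1 (Mop k Q).
Proof.
apply: funext => r /=; rewrite /Mop.
rewrite aff_sum; last exact: EQ_aff.
set f0 := EQ _ _ _ _ _ _ _ _ r.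
under [in RHS]eq_bigr => q _.
  rewrite (aff_sum _ _ _ _ _ _ (EQ_aff n k.+1)) -/f0 [f0 + _]addrC addrK.
  over.
under [in RHS]eq_bigr => q _ do
  rewrite (eq_bigr _ (fun b _ => mulrBr (pr q b) _ f0)) sumrB -mulr_suml pr1 mul1r mulrBr.
by rewrite sumrB -mulr_suml ps1 mul1r addrC subrK.
Qed.
Lemma EQ_last n k Q : EQ c pr supp ps lam n.+1 k Q = Mop (k + n) (EQ c pr supp ps lam n k Q).
Proof.
elim: n k Q => [|n IH] k Q; first by rewrite addn0.
by rewrite EQ_first IH EQ_first addSnnS.
Qed.

Definition BopA (Q : T -> R) r := \sum_(b <- supp r) pr r b * \sum_(t <- b) Q t.

Lemma Mop_eq l Q r : Mop l Q r = Q r + ps r * lam l * (c r + BopA Q r - Q r).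
Proof.
rewrite /Mop (bigD1 r) //=.
have -> : \sum_(q | q != r) ps q * \sum_(b <- supp q) pr q b * qupdate c Q (lam l) q b r
     = \sum_(q | q != r) ps q * Q r.
  apply: eq_bigr => q qr; congr (_ * _).
  rewrite -[RHS]mul1r -(pr1 q) mulr_suml; apply: eq_bigr => b _.
  by rewrite /qupdate eq_sym (negbTE qr).
have -> : \sum_(q | q != r) ps q * Q r = (1 - ps r) * Q r.
  by rewrite -mulr_suml -ps1 [in RHS](bigD1 r) //= addrAC subrr add0r.
have -> : \sum_(b <- supp r) pr r b * qupdate c Q (lam l) r b r =
   \sum_(b <- supp r) (pr r b * ((1 - lam l) * Q r + lam l * c r) + lam l * (pr r b * \sum_(t <- b) Q t)).
  by apply: eq_bigr => b _; rewrite /qupdate eqxx; ring.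
rewrite big_split /= -mulr_suml pr1 -mulr_sumr /BopA; ring.
Qed.
End Alg.

Lemma le_sum1 (R : realType) (T : finType) (f : T -> R) r :
  (forall t, 0 <= f t) -> f r <= \sum_(t : T) f t.
Proof. by move=> h; rewrite (bigD1 r) //= lerDl sumr_ge0. Qed.

Theorem theorem4 (R : realType) (T : finType)
  (c : T -> R) (pr : T -> seq T -> R) (supp : T -> seq (seq T))
  (cs : T -> \bar R)
  (lam : nat -> R) (ps : T -> R) (pmin : R) (Q0 : T -> R) :
  is_BMC c pr supp ->
  is_least_fixpoint c pr supp cs ->
  (forall q, (cs q < +oo)%E) ->
  (forall i, 0 <= lam i <= 1) ->
  (series lam @ \oo --> +oo) ->
  (forall q, 0 <= ps q) -> \sum_(q : T) ps q = 1 ->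
  0 < pmin -> (forall q, pmin <= ps q) ->
  (forall q, 0 <= Q0 q) ->
  forall q, (fun i => EQi c pr supp ps lam Q0 i q) @ \oo --> fine (cs q).
Proof.
move=> [c0 pr0 prn _ pr1] [cs0 csfix _] csfin lam01 Sdiv ps0 ps1 pmin0 pminp _ q.
set s := fun r => fine (cs r).
have csE : forall r, cs r = (s r)%:E.
  by move=> r; rewrite /s fineK // ge0_fin_numE.
have s0 : forall r, 0 <= s r by move=> r; rewrite -lee_fin -csE.
have sfix : forall r, s r = c r + Bop R T pr supp s r.
  move=> r; apply/eqP; rewrite -eqe; apply/eqP.
  rewrite -csE; have := congr1 (fun f => f r) csfix; rewrite /= => <-.
  rewrite /Fop EFinD /Bop -sumEFin; congr (_ + _)%E; apply: eq_bigr => b _.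
  by rewrite EFinM; congr (_ * _)%E; rewrite -sumEFin; apply: eq_bigr => t _; rewrite csE.
have B0 : forall r, 0 <= Bop R T pr supp s r.
  by move=> r; apply: sumr_ge0 => b _; apply: mulr_ge0 => //; apply: sumr_ge0.
have spos : forall r, 0 < s r.
  by move=> r; rewrite sfix; apply: ltr_wpDr => //.
set Sig := \sum_(r : T) s r / c r.
have sc0 : forall r, 0 <= s r / c r by move=> r; apply: divr_ge0 => //; exact: ltW.
have Sig1 : 1 <= Sig.
  apply: le_trans (le_sum1 _ _ _ q sc0); rewrite ler_pdivlMr // mul1r sfix lerDl; exact: B0.
have Sig0 : 0 < Sig by apply: lt_le_trans Sig1.
set gam := 1 - Sig^-1.
have gam01 : 0 <= gam < 1.
  apply/andP; split; first by rewrite subr_ge0 invr_le1 // ?unitfE ?gt_eqF.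
  by rewrite /gam ltrBlDr ltrDl invr_gt0.
have Bgam : forall r, Bop R T pr supp s r <= gam * s r.
  move=> r; have h := le_sum1 _ _ _ r sc0; rewrite -/Sig in h.
  have e1 : Bop R T pr supp s r = s r - c r by rewrite {1}sfix addrAC subrr add0r.
  rewrite e1 /gam mulrBl mul1r lerD2l lerN2 mulrC ler_pdivrMr //.
  by rewrite -ler_pdivrMl // mulrC.
set x := fun i => EQi c pr supp ps lam Q0 i.
set al := fun i r => ps r * lam i.
have ps1' : forall r, ps r <= 1 by move=> r; rewrite -ps1; exact: le_sum1.
have al01 : forall i r, 0 <= al i r <= 1.
  move=> i r; have [l0 l1] := andP (lam01 i); apply/andP; split.
    exact: mulr_ge0.
  by rewrite /al -(mulr1 1); apply: ler_pM.
have alp : forall i r, pmin * lam i <= al i r.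
  by move=> i r; have [l0 l1] := andP (lam01 i); apply: ler_wpM2r.
have lam0 : forall i, 0 <= lam i by move=> i; have [] := andP (lam01 i).
have xrec : forall i r, x i.+1 r = x i r + al i r * (c r + Bop R T pr supp (x i) r - x i r).
  move=> i r; rewrite /x /EQi (EQ_last _ _ _ _ _ _ _ ps1 pr1) add0n (Mop_eq _ _ _ _ _ _ _ ps1 pr1) /al /BopA /Bop; ring.
set m := \sum_(r : T) `|Q0 r - s r| / s r.
have m0 : 0 <= m by apply: sumr_ge0 => r _; apply: divr_ge0.
have hc := conv _ _ _ _ pr0 _ _ _ _ _ _ _ spos sfix gam01 Bgam al01 alp pmin0 lam0 xrec Sdiv _ q m0.
apply: hc.
move=> r; rewrite /e /x /EQi /= -ler_pdivrMr //.
by apply: (le_sum1 _ _ (fun r => `|Q0 r - s r| / s r)) => t; apply: divr_ge0.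
Qed.
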